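(* Let $K \ge 1$ and let $\mathbf{\Phi} \in \mathbb{R}^{m\times n}$ satisfy the RIP with $\delta_{K+1} < \frac{1}{\sqrt{K}+1}$. Let $\mathbf{x} \in \mathbb{R}^n$ with $|\mathrm{supp}(\mathbf{x})| = K$, let $\mathbf{v} \in \mathbb{R}^m$, and let $\mathbf{y} = \mathbf{\Phi}\mathbf{x} + \mathbf{v}$. If $$\sqrt{\mathrm{SNR}} > \frac{2\sqrt{K}\,(1+\delta_{K+1})}{\bigl(1-(\sqrt{K}+1)\delta_{K+1}\bigr)\sqrt{\mathrm{MAR}}},$$ then OMP run for $K$ iterations on $(\mathbf{\Phi},\mathbf{y},K)$ selects an index of $\mathrm{supp}(\mathbf{x})$ at every iteration (regardless of how ties are broken), so that its output satisfies $\mathcal{T}^K = \mathrm{supp}(\mathbf{x})$.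
   Context: Notation: $\Omega=\{1,\dots,n\}$; $\phi_i$ denotes the $i$-th column of $\mathbf{\Phi}$; $\mathbf{\Phi}'$ is the transpose; for $\mathcal{S}\subseteq\Omega$, $\mathbf{\Phi}_{\mathcal{S}}$ is the submatrix of columns indexed by $\mathcal{S}$ and $\mathbf{x}_{\mathcal{S}}$ the restriction of $\mathbf{x}$ to $\mathcal{S}$. A vector is $K$-sparse if it has at most $K$ nonzero entries. RIP: for an integer $s\ge1$, the isometry constant $\delta_s$ of $\mathbf{\Phi}$ is the smallest $c\in[0,1)$ such that $(1-c)\|\mathbf{z}\|_2^2 \le \|\mathbf{\Phi}\mathbf{z}\|_2^2 \le (1+c)\|\mathbf{z}\|_2^2$ for all $s$-sparse $\mathbf{z}\in\mathbb{R}^n$; ''$\mathbf{\Phi}$ satisfies the RIP with $\delta_s<a$'' means such a constant exists and is $<a$. $\mathrm{SNR} := \|\mathbf{\Phi}\mathbf{x}\|_2^2/\|\mathbf{v}\|_2^2$ (taken as $+\infty$ if $\mathbf{v}=\mathbf{0}$), and with $\mathcal{T}=\mathrm{supp}(\mathbf{x})$, $\mathrm{MAR} := \dfrac{\min_{j\in\mathcal{T}}|x_j|^2}{\|\mathbf{x}\|_2^2/K}$. OMP (orthogonal matching pursuit) with input $\mathbf{\Phi},\mathbf{y},K$: set $\mathcal{T}^0=\emptyset$, $\mathbf{r}^0=\mathbf{y}$; for $k=1,\dots,K$: choose $t^k \in \arg\max_{i\in\Omega\setminus\mathcal{T}^{k-1}} |\langle\phi_i,\mathbf{r}^{k-1}\rangle|$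 (ties broken arbitrarily), set $\mathcal{T}^k=\mathcal{T}^{k-1}\cup\{t^k\}$, $\mathbf{x}^k = \arg\min_{\mathbf{u}:\,\mathrm{supp}(\mathbf{u})\subseteq\mathcal{T}^k}\|\mathbf{y}-\mathbf{\Phi}\mathbf{u}\|_2$ (least squares on $\mathcal{T}^k$), and $\mathbf{r}^k=\mathbf{y}-\mathbf{\Phi}\mathbf{x}^k$. Output: $\mathcal{T}^K$ and $\mathbf{x}^K$. *)

(* Defs.v *)
From HB Require Import structures.
From mathcomp Require Import all_boot all_order all_algebra.
Set Implicit Arguments. Unset Strict Implicit. Unset Printing Implicit Defensive.
Import Order.TTheory GRing.Theory Num.Theory.
Local Open Scope ring_scope.

Section OMPDefs.
Variable R : rcfType.

Definition norm2 {p : nat} (u : 'cV[R]_p) : R := \sum_(i < p) u i 0 ^+ 2.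

Definition supp {p : nat} (u : 'cV[R]_p) : {set 'I_p} := [set i | u i 0 != 0].

Definition sparse {p : nat} (s : nat) (u : 'cV[R]_p) : Prop := (#|supp u| <= s)%N.

Definition RIP_bound {m n : nat} (Phi : 'M[R]_(m, n)) (s : nat) (c : R) : Prop :=
  0 <= c /\ c < 1 /\
  forall z : 'cV[R]_n, sparse s z ->
    (1 - c) * norm2 z <= norm2 (Phi *m z) /\ norm2 (Phi *m z) <= (1 + c) * norm2 z.

Definition isometry_constant {m n : nat} (Phi : 'M[R]_(m, n)) (s : nat) (delta : R)
  : Prop :=
  RIP_bound Phi s delta /\ forall c, RIP_bound Phi s c -> delta <= c.

Definition colip {m n : nat} (Phi : 'M[R]_(m, n)) (i : 'I_n) (r : 'cV[R]_m) : R :=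
  \sum_(j < m) Phi j i * r j 0.

Definition is_ls {m n : nat} (Phi : 'M[R]_(m, n)) (y : 'cV[R]_m) (S : {set 'I_n})
  (u : 'cV[R]_n) : Prop :=
  supp u \subset S /\
  forall w : 'cV[R]_n, supp w \subset S ->
    norm2 (y - Phi *m u) <= norm2 (y - Phi *m w).

Definition Tset {n : nat} (t : nat -> 'I_n) (k : nat) : {set 'I_n} :=
  \bigcup_(1 <= j < k.+1) [set t j].

(* (t, u) is a run of OMP on (Phi, y, K) (with some tie-breaking):
   t k = t^k is the index chosen at iteration k, u k = x^k the LS estimate,
   residual r^k = y - Phi x^k; x^0 = 0 so that r^0 = y. *)
Definition omp_run {m n : nat} (Phi : 'M[R]_(m, n)) (y : 'cV[R]_m) (K : nat)
  (t : nat -> 'I_n) (u : nat -> 'cV[R]_n) : Prop :=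
  u 0%N = 0 /\
  forall k : nat, (1 <= k <= K)%N ->
    [/\ t k \notin Tset t k.-1,
        (forall i : 'I_n, i \notin Tset t k.-1 ->
           `|colip Phi i (y - Phi *m u k.-1)| <= `|colip Phi (t k) (y - Phi *m u k.-1)|)
      & is_ls Phi y (Tset t k) (u k)].

(* The minimum over
   the (nonempty) support is computed as a fold of Num.min started at
   ||x||^2, which is >= every |x_j|^2, so it does not affect the value. *)
Definition minsq {n : nat} (x : 'cV[R]_n) : R :=
  \big[Num.min/norm2 x]_(j in supp x) (x j 0 ^+ 2).

Definition MAR {n : nat} (K : nat) (x : 'cV[R]_n) : R :=
  minsq x / (norm2 x / K%:R).

(* SNR (used only when v <> 0; SNR = +oo when v = 0) *)
Definition SNR {m n : nat} (Phi : 'M[R]_(m, n)) (x : 'cV[R]_n) (v : 'cV[R]_m) : R :=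
  norm2 (Phi *m x) / norm2 v.

End OMPDefs.

(* Main.v *)
Require Import Defs.
From HB Require Import structures.
From mathcomp Require Import all_boot all_order all_algebra.
From mathcomp Require Import ring lra.
Import Order.TTheory GRing.Theory Num.Theory.
Local Open Scope ring_scope.

Section Aux.
Set Implicit Arguments. Unset Strict Implicit.
Variable R : rcfType.

Definition ip {p : nat} (a b : 'cV[R]_p) : R := \sum_i a i 0 * b i 0.

Lemma norm2E p (a : 'cV[R]_p) : norm2 a = ip a a.
Proof. by apply: eq_bigr => i _; rewrite expr2. Qed.

Lemma ipC p (a b : 'cV[R]_p) : ip a b = ip b a.
Proof. by apply: eq_bigr => i _; rewrite mulrC. Qed.

Lemma ipDl p (a b c : 'cV[R]_p) : ip (a + b) c = ip a c + ip b c.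
Proof. by rewrite /ip -big_split; apply: eq_bigr => i _; rewrite mxE mulrDl. Qed.

Lemma ipZl p k (a b : 'cV[R]_p) : ip (k *: a) b = k * ip a b.
Proof. by rewrite /ip mulr_sumr; apply: eq_bigr => i _; rewrite mxE mulrA. Qed.

Lemma ipNl p (a b : 'cV[R]_p) : ip (- a) b = - ip a b.
Proof. by rewrite /ip -sumrN; apply: eq_bigr => i _; rewrite mxE mulNr. Qed.

Lemma ipBl p (a b c : 'cV[R]_p) : ip (a - b) c = ip a c - ip b c.
Proof. by rewrite ipDl ipNl. Qed.

Lemma ipDr p (a b c : 'cV[R]_p) : ip c (a + b) = ip c a + ip c b.
Proof. by rewrite ipC ipDl !(ipC c). Qed.
Lemma ipZr p k (a b : 'cV[R]_p) : ip b (k *: a) = k * ip b a.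
Proof. by rewrite ipC ipZl ipC. Qed.
Lemma ipBr p (a b c : 'cV[R]_p) : ip c (a - b) = ip c a - ip c b.
Proof. by rewrite ipC ipBl !(ipC c). Qed.

Lemma ip_ge0 p (a : 'cV[R]_p) : 0 <= ip a a.
Proof. by apply: sumr_ge0 => i _; rewrite -expr2 sqr_ge0. Qed.

Lemma norm2_ge0 p (a : 'cV[R]_p) : 0 <= norm2 a.
Proof. by rewrite norm2E ip_ge0. Qed.

Lemma ip_eq0 p (a : 'cV[R]_p) : ip a a = 0 -> a = 0.
Proof.
move=> H; have := psumr_eq0P _ H => H1.
apply/matrixP => i j; rewrite (ord1 j) mxE.
have /eqP := H1 (fun i _ => (ltac:(by rewrite -expr2 sqr_ge0) : 0 <= a i 0 * a i 0)) i isT.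
by rewrite mulf_eq0 orbb => /eqP.
Qed.

Lemma CS p (a b : 'cV[R]_p) : ip a b ^+ 2 <= ip a a * ip b b.
Proof.
have [c0|cn0] := eqVneq (ip b b) 0.
  have -> : ip a b = 0.
    by rewrite (ip_eq0 c0) /ip big1 // => i _; rewrite mxE mulr0.
  by rewrite expr0n /= mulr_ge0 ?ip_ge0.
have cpos : 0 < ip b b by rewrite lt_def cn0 ip_ge0.
have := ip_ge0 (ip b b *: a - ip a b *: b).
rewrite !(ipBl, ipBr, ipZl, ipZr) (ipC b a) => H.
nra.
Qed.

Lemma CSabs p (a b : 'cV[R]_p) :
  `|ip a b| <= Num.sqrt (ip a a) * Num.sqrt (ip b b).
Proof.
by rewrite -sqrtrM ?ip_ge0 // -sqrtr_sqr ler_sqrt ?CS // mulr_ge0 ?ip_ge0.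
Qed.


Lemma colipE m n (Phi : 'M[R]_(m, n)) i r : colip Phi i r = ip (col i Phi) r.
Proof. by apply: eq_bigr => l _; rewrite mxE. Qed.

Lemma ip_mul m n (Phi : 'M[R]_(m, n)) z r :
  ip (Phi *m z) r = \sum_i z i 0 * colip Phi i r.
Proof.
rewrite /ip /colip.
under eq_bigr do rewrite mxE big_distrl /=.
rewrite exchange_big /=; apply: eq_bigr => i _; rewrite big_distrr /=.
by apply: eq_bigr => l _; rewrite mulrCA mulrA.
Qed.

Lemma ip_delta p (a : 'cV[R]_p) j : ip a (delta_mx j 0) = a j 0.
Proof.
rewrite /ip (bigD1 j) //= big1 => [|i /negbTE ne]; first by rewrite mxE !eqxx mulr1 addr0.
by rewrite mxE ne mulr0.
Qed.

Lemma supp_sub p (a : 'cV[R]_p) (A : {set 'I_p}) :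
  (forall l, l \notin A -> a l 0 = 0) -> supp a \subset A.
Proof.
move=> H; apply/subsetP => l; rewrite inE; apply: contraR => /H ->.
by rewrite eqxx.
Qed.

Lemma notsupp p (a : 'cV[R]_p) l : l \notin supp a -> a l 0 = 0.
Proof. by rewrite inE negbK => /eqP. Qed.

Lemma sparse_sub p s (a : 'cV[R]_p) (A : {set 'I_p}) :
  supp a \subset A -> (#|A| <= s)%N -> sparse s a.
Proof. by move=> H1 H2; apply: leq_trans (subset_leq_card H1) H2. Qed.

Lemma norm2_shift m n (Phi : 'M[R]_(m, n)) z j (tau : R) :
  norm2 (Phi *m (z + tau *: delta_mx j 0)) =
  norm2 (Phi *m z) + 2 * tau * colip Phi j (Phi *m z) + tau ^+ 2 * norm2 (col j Phi).
Proof.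
rewrite mulmxDr -scalemxAr -colE !norm2E !(ipDl, ipDr, ipZl, ipZr) colipE.
rewrite (ipC (Phi *m z)); ring.
Qed.

Lemma norm2_shiftz p (z : 'cV[R]_p) j (tau : R) : z j 0 = 0 ->
  norm2 (z + tau *: delta_mx j 0) = norm2 z + tau ^+ 2.
Proof.
move=> zj; rewrite !norm2E !(ipDl, ipDr, ipZl, ipZr) (ipC _ z) !ip_delta mxE !eqxx zj.
by rewrite -norm2E /= mulr1 !mulr0 !addr0 add0r expr2.
Qed.


Lemma supp_shift p (z : 'cV[R]_p) j (tau : R) :
  supp (z + tau *: delta_mx j 0) \subset j |: supp z.
Proof.
apply: supp_sub => l; rewrite !inE negb_or => /andP[lj lz].
by move: lz; rewrite negbK => /eqP lz; rewrite !mxE lz (negbTE lj) mulr0 addr0.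
Qed.

Lemma norm2_delta p (j : 'I_p) : norm2 (delta_mx j 0 : 'cV[R]_p) = 1.
Proof. by rewrite norm2E ip_delta mxE !eqxx. Qed.

Lemma colnorm m n (Phi : 'M[R]_(m, n)) s d j : (1 <= s)%N ->
  RIP_bound Phi s d -> norm2 (col j Phi) <= 1 + d.
Proof.
move=> s1 [_ [_ H]].
have sp : sparse s (delta_mx j 0 : 'cV[R]_n).
  apply: (@sparse_sub _ _ _ [set j]); last by rewrite cards1.
  by apply: supp_sub => l; rewrite !inE mxE => /negbTE ->.
by have [_] := H _ sp; rewrite -colE norm2_delta mulr1.
Qed.

Lemma near_orth m n (Phi : 'M[R]_(m, n)) K d z j :
  RIP_bound Phi K.+1 d -> sparse K z -> z j 0 = 0 ->
  `|colip Phi j (Phi *m z)| * Num.sqrt (norm2 z) <= d * norm2 z.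
Proof.
move=> [d0 [d1 H]] sz zj.
set Z := Num.sqrt (norm2 z).
have Z0 : 0 <= Z by apply: sqrtr_ge0.
have ZZ : Z ^+ 2 = norm2 z by rewrite sqr_sqrtr // norm2_ge0.
have sp : forall tau, sparse K.+1 (z + tau *: delta_mx j 0).
  move=> tau; apply: sparse_sub (supp_shift _ _ _) _.
  rewrite cardsU1; move: sz; rewrite /sparse.
  by case: (_ \notin _) => /= h; rewrite ?add1n ?add0n ?ltnS // ltnW.
have [l1 u1] := H _ (sp Z).
have [l2 u2] := H _ (sp (- Z)).
move: l1 u1 l2 u2; rewrite !norm2_shift !norm2_shiftz //.
set b := colip _ _ _; set P := norm2 (Phi *m z); set N := norm2 (col j Phi).
rewrite -ZZ sqrrN => l1 u1 l2 u2.
rewrite -{1}(ger0_norm Z0) -normrM ler_norml; apply/andP; split; nra.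
Qed.

Lemma ls_orth m n (Phi : 'M[R]_(m, n)) y S u i :
  is_ls Phi y S u -> i \in S -> colip Phi i (y - Phi *m u) = 0.
Proof.
move=> [su H] iS.
set r := y - Phi *m u; set a := colip Phi i r.
set N := norm2 (col i Phi).
have N0 : 0 <= N by apply: norm2_ge0.
set e := a / (N + 1).
have ea : e * (N + 1) = a by rewrite /e divfK // gt_eqF // ltr_wpDl.
have sw : supp (u + e *: delta_mx i 0) \subset S.
  by apply: subset_trans (supp_shift _ _ _) _; rewrite subUset sub1set iS su.
have := H _ sw.
have -> : y - Phi *m (u + e *: delta_mx i 0) = r - e *: col i Phi.
  by rewrite mulmxDr -scalemxAr -colE /r opprD addrA.
have aE : a = ip (col i Phi) y - ip (col i Phi) (Phi *m u) by rewrite /a colipE ipBr.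
rewrite !norm2E !(ipBl, ipBr, ipZl, ipZr) (ipC y (col i Phi)) (ipC (Phi *m u) (col i Phi)) -(norm2E (col i Phi)) -/N => Hle.
have : e ^+ 2 * (N + 2) <= 0 by nra.
move=> He; have e0 : e = 0.
  apply/eqP; rewrite -sqrf_eq0 eq_le sqr_ge0 andbT.
  by rewrite -(pmulr_lle0 _ (_ : 0 < N + 2)) // ltr_wpDl.
by rewrite -ea e0 mul0r.
Qed.


Lemma sum_sub_norm2 p (z : 'cV[R]_p) (A : {set 'I_p}) :
  \sum_(i in A) z i 0 ^+ 2 <= norm2 z.
Proof.
rewrite /norm2 [X in _ <= X](bigID (fun i => i \in A)) /= lerDl.
apply: sumr_ge0 => i _; apply: sqr_ge0.
Qed.

Lemma CS_count p (z : 'cV[R]_p) (A : {set 'I_p}) :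
  (\sum_(i in A) `|z i 0|) ^+ 2 <= #|A|%:R * \sum_(i in A) z i 0 ^+ 2.
Proof.
pose pz : 'cV[R]_p := \col_i (if i \in A then `|z i 0| else 0).
pose one : 'cV[R]_p := \col_i (if i \in A then 1 else 0).
have e1 : ip pz one = \sum_(i in A) `|z i 0|.
  rewrite /ip [RHS]big_mkcond /=; apply: eq_bigr => i _; rewrite !mxE.
  by case: ifP; rewrite ?mulr1 ?mulr0.
have e2 : ip pz pz = \sum_(i in A) z i 0 ^+ 2.
  rewrite /ip [RHS]big_mkcond /=; apply: eq_bigr => i _; rewrite !mxE.
  by case: ifP; rewrite ?mulr0 // -expr2 real_normK // num_real.
have e3 : ip one one = #|A|%:R.
  rewrite /ip -sumr_const [RHS]big_mkcond /=; apply: eq_bigr => i _; rewrite !mxE.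
  by case: ifP; rewrite ?mulr1 ?mulr0.
by have := CS pz one; rewrite e1 e2 e3 mulrC.
Qed.

Lemma core m n (Phi : 'M[R]_(m, n)) (x : 'cV[R]_n) (v : 'cV[R]_m) K d s2
  (S : {set 'I_n}) (u : 'cV[R]_n) (j : 'I_n) :
  RIP_bound Phi K.+1 d -> #|supp x| = K ->
  0 < s2 -> (forall i, i \in supp x -> s2 <= x i 0 ^+ 2) ->
  0 < 1 - (Num.sqrt K%:R + 1) * d ->
  2 * Num.sqrt (1 + d) * Num.sqrt (norm2 v) <
    (1 - (Num.sqrt K%:R + 1) * d) * Num.sqrt s2 ->
  S \subset supp x -> (#|S| < K)%N -> supp u \subset S ->
  (forall i, i \in S -> colip Phi i (Phi *m x + v - Phi *m u) = 0) ->
  j \notin S ->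
  (forall i, i \notin S -> `|colip Phi i (Phi *m x + v - Phi *m u)| <=
                           `|colip Phi j (Phi *m x + v - Phi *m u)|) ->
  j \in supp x.
Proof.
move=> HR cardx s2pos Hs2 cKpos Hsig SsubT cardS suS orth jS Hmax.
have [d0 [d1 HRIP]] := HR.
apply: contraT => jT.
set r := Phi *m x + v - Phi *m u.
set z := x - u.
have rE : r = Phi *m z + v by rewrite /r /z mulmxBr addrAC.
have ux : forall l, l \notin S -> u l 0 = 0.
  move=> l lS; apply/eqP; apply: contraR lS => ul.
  by apply: (subsetP suS); rewrite inE.
have zsupp : supp z \subset supp x.
  apply: supp_sub => l lx; rewrite !mxE (notsupp lx) ux ?subrr //.
  by apply: contra lx; apply: (subsetP SsubT).
have zj : z j 0 = 0 by rewrite !mxE (notsupp jT) ux // subrr.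
set A := supp x :\: S.
have zA : forall i, i \in A -> z i 0 = x i 0.
  by move=> i; rewrite in_setD => /andP[iS _]; rewrite !mxE ux // subr0.
set a := fun i => colip Phi i r.
set B := `|a j|.
set W1 := \sum_(i in A) `|z i 0|.
set ipz := ip (Phi *m z) r.
have h1 : ipz = \sum_(i in A) z i 0 * a i.
  rewrite /ipz ip_mul (bigID (fun i => i \in A)) /= [X in _ + X = _]big1 ?addr0 // => i iA.
  move: iA; rewrite in_setD negb_and negbK => /orP[iS|ix].
    by rewrite /a orth // mulr0.
  have iz : i \notin supp z by apply: contra ix; apply: (subsetP zsupp).
  by rewrite (notsupp iz) mul0r.
have h2 : ipz <= W1 * B.
  rewrite h1 /W1 mulr_suml; apply: ler_sum => i iA.
  apply: le_trans (ler_norm _) _; rewrite normrM ler_wpM2l //.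
  by apply: Hmax; move: iA; rewrite in_setD => /andP[].
set P := Num.sqrt (norm2 (Phi *m z)).
set e := Num.sqrt (norm2 v).
set Z := Num.sqrt (norm2 z).
set g := Num.sqrt (1 + d).
have P0 : 0 <= P by apply: sqrtr_ge0.
have e0 : 0 <= e by apply: sqrtr_ge0.
have Z0 : 0 <= Z by apply: sqrtr_ge0.
have g0 : 0 <= g by apply: sqrtr_ge0.
have PP : P ^+ 2 = norm2 (Phi *m z) by rewrite sqr_sqrtr // norm2_ge0.
have ZZ : Z ^+ 2 = norm2 z by rewrite sqr_sqrtr // norm2_ge0.
have h3 : P ^+ 2 - P * e <= ipz.
  rewrite /ipz rE ipDr -norm2E PP lerD2l.
  by have := CSabs (Phi *m z) v; rewrite -!norm2E -/P -/e ler_norml => /andP[].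
have sz : sparse K z by apply: sparse_sub zsupp _; rewrite cardx.
have szK1 : sparse K.+1 z by apply: leq_trans sz _.
have [h6a h6b] := HRIP _ szK1.
have h6c : P <= g * Z.
  by rewrite /P /g /Z -sqrtrM ?ler_sqrt // ?mulr_ge0 ?norm2_ge0 // addr_ge0.
have hb1 : `|colip Phi j (Phi *m z)| * Z <= d * Z ^+ 2.
  by rewrite ZZ; exact: (near_orth HR sz zj).
set Nj := Num.sqrt (norm2 (col j Phi)).
have Nj0 : 0 <= Nj by apply: sqrtr_ge0.
have hNj : Nj <= g by rewrite /Nj /g ler_sqrt ?addr_ge0 // (colnorm j (ltn0Sn K) HR).
have hb2 : `|colip Phi j v| <= Nj * e.
  by rewrite colipE; have := CSabs (col j Phi) v; rewrite -!norm2E.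
have hB : B <= `|colip Phi j (Phi *m z)| + `|colip Phi j v|.
  by rewrite /B /a rE colipE ipDr -!colipE ler_normD.
pose q := Num.sqrt (#|A|%:R : R).
set sg := Num.sqrt s2.
have q0 : 0 <= q by apply: sqrtr_ge0.
have sg0 : 0 <= sg by apply: sqrtr_ge0.
have cardA : (0 < #|A|)%N.
  by rewrite cardsD (setIidPr SsubT) subn_gt0 cardx.
have cardAK : (#|A| <= K)%N by rewrite -cardx subset_leq_card // subsetDl.
have hq1 : 1 <= q by rewrite /q -[X in X <= _]sqrtr1 ler_sqrt ?ler0n // ler1n.
have hqK : q <= Num.sqrt K%:R by rewrite /q ler_sqrt ?ler0n // ler_nat.
have hW2 : #|A|%:R * s2 <= \sum_(i in A) z i 0 ^+ 2.
  rewrite mulr_natl -sumr_const; apply: ler_sum => i iA; rewrite zA //; apply: Hs2.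
  by move: iA; rewrite in_setD => /andP[].
have hZ : q * sg <= Z.
  rewrite /q /sg /Z -sqrtrM ?ler0n // ler_sqrt ?norm2_ge0 //.
  by apply: le_trans hW2 (sum_sub_norm2 _ _).
have W10 : 0 <= W1 by apply: sumr_ge0 => i _; apply: normr_ge0.
have hW1 : W1 <= q * Z.
  rewrite -(ger0_norm W10) -sqrtr_sqr /q /Z -sqrtrM ?ler0n // ler_sqrt;
    last by rewrite mulr_ge0 ?ler0n ?norm2_ge0.
  apply: le_trans (CS_count _ _) _; rewrite ler_wpM2l ?ler0n //.
  exact: sum_sub_norm2.
have sgpos : 0 < sg by rewrite /sg sqrtr_gt0.
have Zpos : 0 < Z.
  apply: lt_le_trans hZ; apply: mulr_gt0 => //; apply: lt_le_trans hq1; exact: ltr01.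
have gg : g ^+ 2 = 1 + d by rewrite sqr_sqrtr // addr_ge0.
set cK := 1 - (Num.sqrt K%:R + 1) * d.
set b1 := `|colip Phi j (Phi *m z)|.
set b2 := `|colip Phi j v|.
have b10 : 0 <= b1 by apply: normr_ge0.
have s0 : b1 <= d * Z.
  by rewrite -(ler_pM2r Zpos) -mulrA -expr2.
have s1 : B <= d * Z + g * e.
  apply: le_trans hB _; apply: lerD => //; apply: le_trans hb2 _; exact: ler_wpM2r.
have s2' : P ^+ 2 - P * e <= W1 * (d * Z + g * e).
  apply: le_trans h3 _; apply: le_trans h2 _; exact: ler_wpM2l.
have s3 : (1 - d) * Z ^+ 2 - g * Z * e <= P ^+ 2 - P * e.
  rewrite ZZ PP; apply: lerB => //; rewrite ler_wpM2r //.
have s4 : W1 * (d * Z + g * e) <= q * Z * (d * Z + g * e).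
  by apply: ler_wpM2r => //; apply: addr_ge0; apply: mulr_ge0.
have s5 : Z * ((1 - d - q * d) * Z - (1 + q) * g * e) <= 0.
  have := le_trans s3 (le_trans s2' s4); nra.
have s5' : (1 - d - q * d) * Z <= (1 + q) * g * e.
  by rewrite -subr_le0 -(pmulr_rle0 _ Zpos).
have s6 : cK * Z <= (1 - d - q * d) * Z.
  by apply: ler_wpM2r => //; rewrite /cK; nra.
have s7 : cK * (q * sg) <= cK * Z by rewrite ler_wpM2l // ltW.
have qpos : 0 < q by apply: lt_le_trans hq1; exact: ltr01.
have s8 : 2 * g * e * q < cK * sg * q by rewrite ltr_pM2r.
have s9 : (1 + q) * g * e <= 2 * g * e * q.
  have : 0 <= g * e by apply: mulr_ge0.
  nra.
have E : cK * sg * q = cK * (q * sg) by ring.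
have := le_trans s7 (le_trans s6 (le_trans s5' s9)); rewrite -E => H.
by have := lt_le_trans s8 H; rewrite ltxx.
Qed.

Lemma hyp_conv (k d E2 X2 PX2 s2 snr mar : R) :
  0 < k -> 0 <= d -> 0 < 1 - (Num.sqrt k + 1) * d -> 0 < E2 -> 0 < X2 -> 0 < s2 ->
  0 <= PX2 ->
  snr = PX2 / E2 -> mar = s2 / (X2 / k) -> PX2 <= (1 + d) * X2 ->
  2 * Num.sqrt k * (1 + d) / ((1 - (Num.sqrt k + 1) * d) * Num.sqrt mar) < Num.sqrt snr ->
  2 * Num.sqrt (1 + d) * Num.sqrt E2 < (1 - (Num.sqrt k + 1) * d) * Num.sqrt s2.
Proof.
move=> k0 d0 cK0 E0 X0 s0 PX0 snrE marE PXle H.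
set sk := Num.sqrt k in cK0 H *; set cK := 1 - (sk + 1) * d in cK0 H *.
have marE' : mar * X2 = s2 * k by rewrite marE; field; rewrite ?gt_eqF.
have snrE' : snr * E2 = PX2 by rewrite snrE divfK ?gt_eqF.
have mar0 : 0 < mar.
  by rewrite marE divr_gt0 // divr_gt0.
have sM0 : 0 < Num.sqrt mar by rewrite sqrtr_gt0.
have D0 : 0 < cK * Num.sqrt mar by apply: mulr_gt0.
rewrite ltr_pdivrMr // in H.
have sk0 : 0 <= sk by apply: sqrtr_ge0.
have skk : sk ^+ 2 = k by rewrite sqr_sqrtr // ltW.
have N0 : 0 <= 2 * sk * (1 + d) by rewrite !mulr_ge0 // addr_ge0.
have H2 : (2 * sk * (1 + d)) ^+ 2 < (Num.sqrt snr * (cK * Num.sqrt mar)) ^+ 2.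
  by rewrite ltrXn2r.
have snr0 : 0 <= snr by rewrite snrE divr_ge0 // ltW.
rewrite !exprMn skk !sqr_sqrtr ?(ltW mar0) // in H2.
have EX0 : 0 < E2 * X2 by apply: mulr_gt0.
have H3 : 4 * k * (1 + d) ^+ 2 * (E2 * X2) < PX2 * cK ^+ 2 * (s2 * k).
  rewrite -(ltr_pM2r EX0) in H2.
  have e1 : snr * (cK ^+ 2 * mar) * (E2 * X2) = (snr * E2) * cK ^+ 2 * (mar * X2) by ring.
  rewrite e1 snrE' marE' in H2.
  by move: H2; congr (_ < _); ring.
have H4 : PX2 * cK ^+ 2 * (s2 * k) <= (1 + d) * X2 * cK ^+ 2 * (s2 * k).
  apply: ler_wpM2r; first by rewrite mulr_ge0 // ltW.
  by apply: ler_wpM2r => //; apply: sqr_ge0.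
have H5 := lt_le_trans H3 H4.
have F0 : 0 < k * (1 + d) * X2 by rewrite !mulr_gt0 // ltr_wpDr.
have H6 : 4 * (1 + d) * E2 < cK ^+ 2 * s2.
  rewrite -(ltr_pM2r F0); move: H5; congr (_ < _); ring.
have g0 : 0 <= 1 + d by rewrite addr_ge0.
rewrite -(@ltr_pXn2r _ 2) // ?nnegrE; last first.
- by rewrite mulr_ge0 ?sqrtr_ge0 // ltW.
- by rewrite !mulr_ge0 ?sqrtr_ge0.
rewrite !exprMn !sqr_sqrtr //; last 2 first; [exact: ltW|exact: ltW|].
by move: H6; congr (_ < _); ring.
Qed.
End Aux.
Lemma TsetS n (t : nat -> 'I_n) k : Tset t k.+1 = t k.+1 |: Tset t k.
Proof. by rewrite /Tset big_nat_recr //= setUC. Qed.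

Lemma Tset0 n (t : nat -> 'I_n) : Tset t 0 = set0.
Proof. by rewrite /Tset big_geq. Qed.

Theorem theorem1 (R : rcfType) (m n K : nat) (Phi : 'M[R]_(m, n))
  (x : 'cV[R]_n) (v : 'cV[R]_m) (delta : R) :
  (1 <= K)%N ->
  isometry_constant Phi K.+1 delta ->
  delta < 1 / (Num.sqrt K%:R + 1) ->
  #|supp x| = K ->
  (v != 0 ->
     Num.sqrt (SNR Phi x v) >
     (2 * Num.sqrt K%:R * (1 + delta)) /
       ((1 - (Num.sqrt K%:R + 1) * delta) * Num.sqrt (MAR K x))) ->
  forall (t : nat -> 'I_n) (u : nat -> 'cV[R]_n),
    omp_run Phi (Phi *m x + v) K t u ->
    (forall k : nat, (1 <= k <= K)%N -> t k \in supp x) /\ Tset t K = supp x.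
Proof.
move=> K1 [HR _] dlt cardx Hsnr t u [u0 Hrun].
have [d0 [d1 HRIP]] := HR.
have sK0 : 0 <= Num.sqrt (K%:R : R) by apply: sqrtr_ge0.
have cK0 : 0 < 1 - (Num.sqrt K%:R + 1) * delta.
  rewrite ltr_pdivlMr in dlt; last by rewrite ltr_wpDl.
  by rewrite subr_gt0 mulrC.
have [i0 i0x] : exists i0, i0 \in supp x.
  by apply/set0Pn; rewrite -card_gt0 cardx.
have xi2 : forall i, i \in supp x -> 0 < x i 0 ^+ 2.
  by move=> i; rewrite inE => xi; rewrite exprn_even_gt0 // xi orbT.
have X2pos : 0 < norm2 x.
  apply: lt_le_trans (xi2 _ i0x) _.
  by have := sum_sub_norm2 x [set i0]; rewrite big_set1.
have s2pos : 0 < minsq x by apply: lt_bigmin => // i; apply: xi2.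
have Hs2 : forall i, i \in supp x -> minsq x <= x i 0 ^+ 2.
  by move=> i ix; apply: bigmin_le_cond.
have spx : sparse K.+1 x by rewrite /sparse cardx.
have Hsig : 2 * Num.sqrt (1 + delta) * Num.sqrt (norm2 v) <
            (1 - (Num.sqrt K%:R + 1) * delta) * Num.sqrt (minsq x).
  have [v0|vn0] := eqVneq v 0.
    have -> : norm2 v = 0 by rewrite v0 /norm2 big1 // => i _; rewrite mxE expr0n.
    by rewrite sqrtr0 mulr0 mulr_gt0 // sqrtr_gt0.
  have E0 : 0 < norm2 v.
    rewrite lt_def norm2_ge0 andbT; apply: contra vn0 => /eqP h.
    by apply/eqP; apply: ip_eq0; rewrite -norm2E.
  apply: (@hyp_conv R K%:R delta (norm2 v) (norm2 x) (norm2 (Phi *m x)) (minsq x)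
            (SNR Phi x v) (MAR K x)) => //.
  - by rewrite ltr0n.
  - exact: norm2_ge0.
  - by have [] := HRIP _ spx.
  - exact: Hsnr.
have key : forall k, (k <= K)%N -> Tset t k \subset supp x /\ #|Tset t k| = k.
  elim => [_|k IH kK]; first by rewrite Tset0 sub0set cards0.
  have [IHs IHc] := IH (ltnW kK).
  have [tnot tmax tls] := Hrun k.+1 kK.
  have [suS orth] : supp (u k) \subset Tset t k /\
      (forall i, i \in Tset t k -> colip Phi i (Phi *m x + v - Phi *m u k) = 0).
    move: kK; case: k {IH IHs IHc tnot tmax tls} => [|k] kK.
      rewrite u0 Tset0; split; last by move=> i; rewrite inE.
      by apply: supp_sub => l _; rewrite mxE.
    have [_ _ ls] := Hrun k.+1 (ltnW kK).
    by split; [exact: ls.1 | move=> i iS; exact: ls_orth ls iS].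
  have tin : t k.+1 \in supp x.
    apply: (core HR cardx s2pos Hs2 cK0 Hsig IHs _ suS orth tnot tmax).
    by rewrite IHc.
  by rewrite TsetS subUset sub1set tin IHs cardsU1 tnot IHc.
split.
  move=> [|k] // /andP[_ kK]; have [sub _] := key k.+1 kK.
  by apply: (subsetP sub); rewrite TsetS setU11.
have [sub c] := key K (leqnn K).
by apply/eqP; rewrite eqEcard sub c cardx leqnn.
Qed.
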